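(* Let $G$ be a $4\times 4$ array with entries in $\{0,1,2,3\}$ in which each of the four values occurs exactly $4$ times, and in which every row and every column is a quad of values, i.e. is of type D (four different values), type H (two values, each occurring twice), or type S (one value occurring four times). If some column of $G$ is of type S, then every row of $G$ is of type D.
   Context: This describes the values of a single attribute in a semimagic quad square built from the 16 cards of the EvenQuads-16 deck (the 16 cards sharing one fixed value of a third attribute), where each value of the attribute appears exactly four times. *)

(* Defs.v *)
From mathcomp Require Import all_boot.
Set Implicit Arguments. Unset Strict Implicit. Unset Printing Implicit Defensive.

Definition grid := 'I_4 -> 'I_4 -> 'I_4.

Definition typeD (l : 'I_4 -> 'I_4) : Prop := injective l.
Definition typeS (l : 'I_4 -> 'I_4) : Prop := forall k k', l k = l k'.
Definition typeH (l : 'I_4 -> 'I_4) : Prop :=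
  exists a b : 'I_4, a <> b /\
    #|[set k | l k == a]| = 2 /\ #|[set k | l k == b]| = 2.
Definition is_quad (l : 'I_4 -> 'I_4) : Prop := typeD l \/ typeH l \/ typeS l.

Definition row (G : grid) (i : 'I_4) : 'I_4 -> 'I_4 := fun j => G i j.
Definition col (G : grid) (j : 'I_4) : 'I_4 -> 'I_4 := fun i => G i j.

Definition balanced (G : grid) : Prop :=
  forall v : 'I_4, #|[set p : 'I_4 * 'I_4 | G p.1 p.2 == v]| = 4.

(* Main.v *)
Require Import Defs.
From mathcomp Require Import all_boot.

Lemma line_D (l : 'I_4 -> 'I_4) (j v : 'I_4) :
  (forall k, (l k == v) = (k == j)) -> is_quad l -> typeD l.
Proof.
move=> Hl [//|[[a [b [ab [Ha Hb]]]]|HS]]; last first.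
  have h0 : (ord0 : 'I_4) == j by rewrite -Hl (HS ord0 j) Hl.
  have h3 : (ord_max : 'I_4) == j by rewrite -Hl (HS ord_max j) Hl.
  by move: h0 h3 => /eqP <- /eqP.
have HV : [set k | l k == v] = [set j] by apply/setP => k; rewrite !inE Hl.
have cV : #|[set k | l k == v]| = 1 by rewrite HV cards1.
case: (eqVneq a v) => [av|av]; first by move: Ha; rewrite av cV.
case: (eqVneq b v) => [bv|bv]; first by move: Hb; rewrite bv cV.
set A := [set k | l k == a] in Ha *; set B := [set k | l k == b] in Hb *;
set V := [set k | l k == v] in cV *.
have dAB : A :&: B = set0.
  apply/setP => k; rewrite !inE; case: (eqVneq (l k) a) => //= ->.
  by apply/negbTE/eqP.
have dABV : (A :|: B) :&: V = set0.
  apply/setP => k; rewrite !inE; case: (eqVneq (l k) v) => [->|]; last by rewrite andbF.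
  by rewrite andbT eq_sym (negbTE av) eq_sym (negbTE bv).
have := max_card (mem (A :|: B :|: V)).
rewrite cardsU dABV cards0 subn0 cardsU dAB cards0 subn0 Ha Hb cV card_ord.
by [].
Qed.

Theorem mainTheorem2 (G : grid) :
  balanced G ->
  (forall i, is_quad (row G i)) ->
  (forall j, is_quad (col G j)) ->
  (exists j, typeS (col G j)) ->
  forall i, typeD (row G i).
Proof.
move=> Hbal Hrow _ [j Hj] i.
set v := G ord0 j.
set S := [set p : 'I_4 * 'I_4 | G p.1 p.2 == v].
set T := [set (i', j) | i' : 'I_4].
have TS : T \subset S.
  apply/subsetP => p /imsetP [i' _ ->]; rewrite inE /=.
  by apply/eqP; apply: (Hj i' ord0).
have cT : #|T| = 4.
  rewrite card_imset ?card_ord //; by move=> x y [].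
have ST : S = T.
  by apply/esym/eqP; rewrite eqEcard TS cT (Hbal v).
apply: (@line_D _ j v) => [k|]; last exact: Hrow.
apply/idP/idP => [Hk|/eqP ->].
  have : (i, k) \in S by rewrite inE.
  by rewrite ST => /imsetP [i' _ [_ ->]].
by apply/eqP; apply: (Hj i ord0).
Qed.
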